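(* The pair $(\ell_2,\ell_2^2)$ fails the uniform sBPBp.
   Context: Scalars $\mathbb{K}=\mathbb{R}$ or $\mathbb{C}$; $\ell_2^2$ is $\mathbb{K}^2$ with the Euclidean norm; $S_X$ is the unit sphere of $X$, $\mathcal{L}(X,Y)$ the bounded linear operators. A pair of Banach spaces $(X,Y)$ has the uniform strong Bishop–Phelps–Bollobás property (uniform sBPBp) if for every $\varepsilon>0$ there exists $\eta(\varepsilon)>0$ such that whenever $T\in\mathcal{L}(X,Y)$ with $\|T\|=1$ and $x_0\in S_X$ satisfy $\|T(x_0)\|>1-\eta(\varepsilon)$, there exists $x_1\in S_X$ with $\|T(x_1)\|=1$ and $\|x_1-x_0\|<\varepsilon$. *)

(* Defs.v *)
From Stdlib Require Export Reals.
Open Scope R_scope.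

Record scalars := Scalars {
  sc :> Type;
  scadd : sc -> sc -> sc;
  scopp : sc -> sc;
  scmul : sc -> sc -> sc;
  scabs : sc -> R }.

Definition Rscal : scalars := Scalars R Rplus Ropp Rmult Rabs.

Record Cpx := mkC { re : R; im : R }.
Definition Cadd (z w : Cpx) := mkC (re z + re w) (im z + im w).
Definition Copp (z : Cpx) := mkC (- re z) (- im z).
Definition Cmul (z w : Cpx) :=
  mkC (re z * re w - im z * im w) (re z * im w + im z * re w).
Definition Cabs (z : Cpx) := sqrt (re z ^ 2 + im z ^ 2).
Definition Cscal : scalars := Scalars Cpx Cadd Copp Cmul Cabs.

Section L2.
Variable K : scalars.

(** Elements of the sequence space K^N; ell_2 is the subset with square-summable modulus. *)
Definition sq_norm_is (x : nat -> K) (l : R) : Prop :=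
  infinite_sum (fun n => (scabs K (x n)) ^ 2) l.
Definition in_l2 (x : nat -> K) : Prop := exists l, sq_norm_is x l.
Definition in_sphere (x : nat -> K) : Prop := sq_norm_is x 1.
Definition in_ball (x : nat -> K) : Prop := exists l, sq_norm_is x l /\ l <= 1.
Definition dist_lt (x y : nat -> K) (eps : R) : Prop :=
  exists l, sq_norm_is (fun n => scadd K (x n) (scopp K (y n))) l /\ sqrt l < eps.

Definition norm2 (v : K * K) : R :=
  sqrt ((scabs K (fst v)) ^ 2 + (scabs K (snd v)) ^ 2).

(** T : ell_2 -> ell_2^2 linear (only its values on ell_2 matter). *)
Definition is_linear_op (T : (nat -> K) -> K * K) : Prop :=
  (forall x y, in_l2 x -> in_l2 y ->
     T (fun n => scadd K (x n) (y n)) =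
     (scadd K (fst (T x)) (fst (T y)), scadd K (snd (T x)) (snd (T y)))) /\
  (forall (a : K) x, in_l2 x ->
     T (fun n => scmul K a (x n)) = (scmul K a (fst (T x)), scmul K a (snd (T x)))).

(** ||T|| = 1, i.e. sup_{||x||<=1} ||T x|| = 1 (this also gives boundedness). *)
Definition opnorm_one (T : (nat -> K) -> K * K) : Prop :=
  (forall x, in_ball x -> norm2 (T x) <= 1) /\
  (forall d, 0 < d -> exists x, in_sphere x /\ norm2 (T x) > 1 - d).

Definition uniform_sBPBp : Prop :=
  forall eps, 0 < eps -> exists eta, 0 < eta /\
    forall T, is_linear_op T -> opnorm_one T ->
    forall x0, in_sphere x0 -> norm2 (T x0) > 1 - eta ->
    exists x1, in_sphere x1 /\ norm2 (T x1) = 1 /\ dist_lt x1 x0 eps.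

End L2.

(* Main.v *)
Require Import Defs.
From Stdlib Require Import Reals.
From Stdlib Require Import Lra Psatz.

Lemma psum_delta (f : nat -> R) (k : nat) :
  (forall n, n <> k -> f n = 0) -> f k = 1 ->
  forall n, sum_f_R0 f n = if Nat.leb k n then 1 else 0.
Proof.
  intros H0 H1 n; induction n as [|n IH].
  - simpl. destruct k; simpl; [exact H1| apply H0; lia].
  - simpl sum_f_R0. rewrite IH.
    destruct (Nat.eq_dec (S n) k) as [E|E].
    + subst k. rewrite H1. rewrite (proj2 (Nat.leb_gt (S n) n)) by lia.
      rewrite Nat.leb_refl. ring.
    + rewrite (H0 _ E).
      destruct (Nat.leb k n) eqn:A.
      * apply Nat.leb_le in A. rewrite (proj2 (Nat.leb_le k (S n))) by lia. ring.
      * apply Nat.leb_gt in A. rewrite (proj2 (Nat.leb_gt k (S n))) by lia. ring.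
Qed.

Lemma isum_delta (f : nat -> R) (k : nat) :
  (forall n, n <> k -> f n = 0) -> f k = 1 -> infinite_sum f 1.
Proof.
  intros H0 H1 e He. exists k. intros n Hn.
  rewrite (psum_delta f k H0 H1 n).
  rewrite (proj2 (Nat.leb_le k n)) by lia.
  unfold R_dist. rewrite Rminus_diag, Rabs_R0. exact He.
Qed.

Section Gen.
Variable K : scalars.
Variables (zero one : K).
Hypothesis Habs_mul : forall a b, scabs K (scmul K a b) = scabs K a * scabs K b.
Hypothesis Hzero : scabs K zero = 0.
Hypothesis Hone : scabs K one = 1.
Hypothesis Hdistr : forall c a b, scmul K c (scadd K a b) = scadd K (scmul K c a) (scmul K c b).
Hypothesis Hcomm : forall c a b, scmul K c (scmul K a b) = scmul K a (scmul K c b).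
Hypothesis Hsub0 : forall a, scadd K a (scopp K zero) = a.
Hypothesis Hc : forall t, 0 <= t -> exists c, scabs K c = t.

Definition ek (k : nat) : nat -> K := fun n => if Nat.eqb n k then one else zero.

Lemma ek_sphere k : in_sphere K (ek k).
Proof.
  unfold in_sphere, sq_norm_is. apply isum_delta with k.
  - intros n Hn. unfold ek. rewrite (proj2 (Nat.eqb_neq n k) Hn), Hzero. ring.
  - unfold ek. rewrite Nat.eqb_refl, Hone. ring.
Qed.

Lemma gen_fail : ~ uniform_sBPBp K.
Proof.
  intro H. destruct (H 1 Rlt_0_1) as [eta [Heta HH]].
  set (t := Rmax (1/2) (1 - eta/2)).
  assert (Ht1 : 1/2 <= t) by apply Rmax_l.
  assert (Ht2 : 1 - eta/2 <= t) by apply Rmax_r.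
  assert (Ht3 : t < 1).
  { unfold t; apply Rmax_lub_lt; lra. }
  destruct (Hc t ltac:(lra)) as [c Hcabs].
  set (T := fun x : nat -> K => (x 0%nat, scmul K c (x 1%nat))).
  assert (Hlin : is_linear_op K T).
  { split.
    - intros x y _ _. unfold T; simpl. rewrite Hdistr. reflexivity.
    - intros a x _. unfold T; simpl. rewrite Hcomm. reflexivity. }
  assert (Hop : opnorm_one K T).
  { split.
    - intros x [l [Hl Hl1]]. unfold norm2, T; simpl.
      pose proof (sum_incr _ 1 l Hl (fun n => pow2_ge_0 _)) as S. simpl in S.
      rewrite Habs_mul, Hcabs. apply Rle_trans with (sqrt 1); [apply sqrt_le_1_alt|rewrite sqrt_1; lra].
      assert (0 <= scabs K (x 1%nat) ^ 2) by apply pow2_ge_0.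
      assert (t^2 <= 1) by (simpl; nra).
      set (b := scabs K (x 1%nat)) in *. set (a := scabs K (x 0%nat)) in *.
      simpl in *. assert (0 <= b*b) by nra. assert (t*t <= 1) by lra.
      assert (t*b*(t*b) <= b*b) by nra. nra.
    - intros d Hd. exists (ek 0). split; [apply ek_sphere|].
      unfold norm2, T, ek; simpl. rewrite Habs_mul, Hone, Hzero.
      match goal with |- sqrt ?e > _ => replace e with 1 by ring end.
      rewrite sqrt_1. lra. }
  destruct (HH T Hlin Hop (ek 1) (ek_sphere 1)) as [x1 [Hs [Hn Hd]]].
  { unfold norm2, T, ek; simpl. rewrite Habs_mul, Hone, Hzero.
    rewrite Hcabs. match goal with |- sqrt ?e > _ => replace e with (t ^ 2) by ring end.
    rewrite sqrt_pow2 by lra. lra. }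
  unfold norm2, T in Hn; simpl in Hn. rewrite Habs_mul, Hcabs in Hn.
  set (a := scabs K (x1 0%nat)) in *. set (b := scabs K (x1 1%nat)) in *.
  assert (Ea : a * (a * 1) + t * b * (t * b * 1) = 1).
  { assert (0 <= a * (a * 1) + t * b * (t * b * 1)) by nra.
    rewrite <- (sqrt_sqrt _ H0), Hn. ring. }
  pose proof (sum_incr _ 1 1 Hs (fun n => pow2_ge_0 _)) as S. simpl in S.
  fold a b in S.
  assert (Htt : t * t < 1) by nra.
  assert (Hb : b * b * (1 - t * t) <= 0) by nra.
  assert (Hb2 : b * b <= 0).
  { destruct (Rle_or_lt (b*b) 0) as [h|h]; [exact h|].
    assert (0 < b*b*(1-t*t)) by (apply Rmult_lt_0_compat; lra). lra. }
  assert (Ha : a * a >= 1) by nra.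
  destruct Hd as [l' [Hl' Hsq]].
  pose proof (sum_incr _ 0 l' Hl' (fun n => pow2_ge_0 _)) as S0. simpl in S0.
  unfold ek in S0; simpl in S0. rewrite Hsub0 in S0. fold a in S0.
  assert (1 <= sqrt l').
  { apply Rle_trans with (sqrt 1); [rewrite sqrt_1; lra|apply sqrt_le_1_alt; lra]. }
  lra.
Qed.
End Gen.

Theorem mainTheorem16 : ~ uniform_sBPBp Rscal /\ ~ uniform_sBPBp Cscal.
Proof.
  split.
  - apply (gen_fail Rscal 0 1); simpl.
    + intros; apply Rabs_mult.
    + apply Rabs_R0.
    + apply Rabs_R1.
    + intros; ring.
    + intros; ring.
    + intros; ring.
    + intros t Ht; exists t; apply Rabs_pos_eq; exact Ht.
  - apply (gen_fail Cscal (mkC 0 0) (mkC 1 0)); simpl.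
    + intros [a1 a2] [b1 b2]; unfold Cabs, Cmul; simpl.
      rewrite <- sqrt_mult by nra. f_equal; ring.
    + unfold Cabs; simpl. replace (0*(0*1)+0*(0*1)) with 0 by ring. apply sqrt_0.
    + unfold Cabs; simpl. replace (1*(1*1)+0*(0*1)) with 1 by ring. apply sqrt_1.
    + intros; unfold Cmul, Cadd; simpl; f_equal; ring.
    + intros; unfold Cmul; simpl; f_equal; ring.
    + intros [a1 a2]; unfold Cadd, Copp; simpl; f_equal; ring.
    + intros t Ht; exists (mkC t 0); unfold Cabs; simpl.
      replace (t*(t*1)+0*(0*1)) with (t^2) by ring. apply sqrt_pow2; exact Ht.
Qed.
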